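(* Let $n\ge3$ and let $\Gamma$ be a $\mathbb{D}_n$-symmetric billiard curve. Let $H=\langle\rho,\sigma\rangle\subset\mathbb{D}_n$ be a dihedral subgroup of order $2N$ with $N\ge3$, generated by a rotation $\rho$ of order $N$ and a reflection $\sigma$. Let $z\in\Gamma^{\mathbb{Z}}$ be a billiard sequence of minimal period $p\ge3$ with spatiotemporal symmetry group $H(z)=H$. Then: - $p$ is an integer multiple of $N$; - there is a unique $1\le M\le N-1$ with $\gcd(M,N)=1$ such that $\rho^M(z_i)=z_{p/N+i}$ for all $i$; - there is a unique $0\le k<p$ such that $\sigma(z_i)=z_{k-i}$ for all $i$.
   Context: $\mathbb{D}_n=\langle R,S\rangle$, where $R$ is rotation by $2\pi/n$ and $S$ is the horizontal reflection. A $\mathbb{D}_n$-symmetric billiard curve is a $C^2$ simple closed $\mathbb{D}_n$-invariant curve bounding a strictly convex domain. A billiard sequence is $z\in\Gamma^{\mathbb{Z}}$ with $z_i\ne z_{i+1}$. The spatiotemporal symmetry group $H(z)$ is the set of $h\in\mathbb{D}_n$ for which there is $k\in\mathbb{Z}$ with $h(z_i)=z_{k+i}$ for all $i$ (time-preserving) or $h(z_i)=z_{k-i}$ for all $i$ (time-reversing). *)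

(* Defs.v *)
From HB Require Import structures.
From mathcomp Require Import all_boot all_order all_algebra.
From mathcomp Require Import all_classical all_reals all_analysis.
Set Implicit Arguments. Unset Strict Implicit. Unset Printing Implicit Defensive.
Import Order.TTheory GRing.Theory Num.Theory numFieldNormedType.Exports.
Local Open Scope classical_set_scope.
Local Open Scope ring_scope.

Section Defs.
Variable R : realType.
Notation P2 := (R * R)%type.

Definition rot (t : R) (v : P2) : P2 :=
  (cos t * v.1 - sin t * v.2, sin t * v.1 + cos t * v.2).

Definition Rn (n k : nat) : P2 -> P2 := rot (2 * pi * k%:R / n%:R).

Definition Sref (v : P2) : P2 := (v.1, - v.2).

Definition Dn (n : nat) : set (P2 -> P2) :=
  [set g | exists k : nat, exists b : bool,
           g = Rn n k \o (if b then Sref else id)].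

Definition is_rotation (n : nat) (g : P2 -> P2) : Prop :=
  exists k : nat, g = Rn n k.
Definition is_reflection (n : nat) (g : P2 -> P2) : Prop :=
  exists k : nat, g = Rn n k \o Sref.

Definition has_order (g : P2 -> P2) (N : nat) : Prop :=
  (0 < N)%N /\ iter N g = id /\ forall m : nat, (0 < m < N)%N -> iter m g <> id.

Definition gen_group (A : set (P2 -> P2)) : set (P2 -> P2) :=
  [set g | forall S : set (P2 -> P2),
      S id -> A `<=` S ->
      (forall f h, S f -> S h -> S (f \o h)) ->
      (forall f h, S f -> f \o h = id -> h \o f = id -> S h) ->
      S g].

Definition C2 (f : R -> R) : Prop :=
  (forall t, derivable f t 1) /\ (forall t, derivable (derive1 f) t 1) /\
  continuous (derive1 (derive1 f) : R -> R).

Definition segment_pt (a b : P2) (t : R) : P2 :=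
  ((1 - t) * a.1 + t * b.1, (1 - t) * a.2 + t * b.2).

Definition strictly_convex (K : set P2) : Prop :=
  forall a b, closure K a -> closure K b -> a <> b ->
  forall t, 0 < t < 1 -> (interior K) (segment_pt a b t).

Definition billiard_curve (Gamma : set P2) : Prop :=
  (exists (L : R) (x y : R -> R),
     0 < L /\ C2 x /\ C2 y /\
     (forall t, x (t + L) = x t /\ y (t + L) = y t) /\
     (forall t, (derive1 x t) ^+ 2 + (derive1 y t) ^+ 2 != 0) /\
     (forall s t, 0 <= s < L -> 0 <= t < L -> (x s, y s) = (x t, y t) -> s = t) /\
     Gamma = [set (x t, y t) | t in `[0, L[]) /\
  (exists K : set P2, strictly_convex K /\ Gamma = closure K `\` interior K).

Definition Dn_symmetric_billiard_curve (n : nat) (Gamma : set P2) : Prop :=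
  billiard_curve Gamma /\ forall g, Dn n g -> g @` Gamma = Gamma.

Definition billiard_sequence (Gamma : set P2) (z : int -> P2) : Prop :=
  (forall i, Gamma (z i)) /\ (forall i, z i <> z (i + 1)).

Definition minimal_period (z : int -> P2) (p : nat) : Prop :=
  (0 < p)%N /\ (forall i, z (i + p%:Z) = z i) /\
  (forall q : nat, (0 < q < p)%N -> exists i, z (i + q%:Z) <> z i).

Definition spatiotemporal (n : nat) (z : int -> P2) : set (P2 -> P2) :=
  [set h | Dn n h /\
     ((exists k : int, forall i, h (z i) = z (k + i)) \/
      (exists k : int, forall i, h (z i) = z (k - i)))].

End Defs.

(* Main.v *)
From Pilot Require Import Defs.
From HB Require Import structures.
From mathcomp Require Import all_boot all_order all_algebra.
From mathcomp Require Import all_classical all_reals all_analysis.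
From mathcomp Require Import ring lra zify.
Import Order.TTheory GRing.Theory Num.Theory.
Local Open Scope classical_set_scope.
Local Open Scope ring_scope.
Local Notation rot := Pilot.Defs.rot.

Lemma rotD (R : realType) (a b : R) (v : R * R) : rot a (rot b v) = rot (a + b) v.
Proof. case: v => x y; rewrite /rot /= cosD sinD; congr (_, _); ring. Qed.

Lemma rot0 (R : realType) (v : R * R) : rot 0 v = v.
Proof. case: v => x y; rewrite /rot /= cos0 sin0; congr (_, _); ring. Qed.

Lemma Sref_rot (R : realType) (t : R) (v : R * R) : Sref (rot t v) = rot (- t) (Sref v).
Proof. case: v => x y; rewrite /rot /Sref /= cosN sinN; congr (_, _); ring. Qed.

Lemma SrefK (R : realType) (v : R * R) : Sref (Sref v) = v.
Proof. case: v => x y; by rewrite /Sref /= opprK. Qed.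

Lemma rot_fix (R : realType) (u : R) (v : R * R) : rot u v = v ->
  v = (0, 0) \/ (cos u = 1 /\ sin u = 0).
Proof.
case: v => x y; rewrite /rot /=; case => h1 h2.
have cs := cos2Dsin2 u.
set c := cos u in h1 h2 cs *; set s := sin u in h1 h2 cs *.
have e1 : (2 - 2 * c) * x = 0.
  have E : (c - 1) ^+ 2 + s ^+ 2 = (c ^+ 2 + s ^+ 2) + 1 - 2 * c by ring.
  rewrite cs in E; have -> : (2 - 2 * c) = (c - 1) ^+ 2 + s ^+ 2 by rewrite E; ring.
  have -> : ((c - 1) ^+ 2 + s ^+ 2) * x = (c - 1) * (c * x - s * y - x) + s * (s * x + c * y - y) by ring.
  by rewrite h1 h2 !subrr !mulr0 addr0.
have e2 : (2 - 2 * c) * y = 0.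
  have E : (c - 1) ^+ 2 + s ^+ 2 = (c ^+ 2 + s ^+ 2) + 1 - 2 * c by ring.
  rewrite cs in E; have -> : (2 - 2 * c) = (c - 1) ^+ 2 + s ^+ 2 by rewrite E; ring.
  have -> : ((c - 1) ^+ 2 + s ^+ 2) * y = - s * (c * x - s * y - x) + (c - 1) * (s * x + c * y - y) by ring.
  by rewrite h1 h2 !subrr !mulr0 addr0.
have [c1|c1] := eqVneq c 1.
  right; split => //; apply/eqP; rewrite -sqrf_eq0.
  by apply/eqP; rewrite c1 in cs; lra.
left; have nz : 2 - 2 * c != 0.
  apply/eqP => h; move/eqP: c1; apply; lra.
move/eqP: e1; rewrite mulf_eq0 (negbTE nz) /= => /eqP ->.
move/eqP: e2; rewrite mulf_eq0 (negbTE nz) /= => /eqP ->.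
by [].
Qed.

Lemma rot_fix2 (R : realType) (u : R) (v w : R * R) : v <> w ->
  rot u v = v -> rot u w = w -> cos u = 1 /\ sin u = 0.
Proof.
move=> vw /rot_fix [e1|//] /rot_fix [e2|//].
by exfalso; apply: vw; rewrite e1 e2.
Qed.

Lemma rot_id (R : realType) (u : R) : cos u = 1 -> sin u = 0 -> rot u = id.
Proof.
move=> c s; apply/funext => -[x y]; rewrite /rot c s /=; congr (_, _); ring.
Qed.

Lemma iter_rot (R : realType) (t : R) (m : nat) v :
  iter m (rot t) v = rot (m%:R * t) v.
Proof.
elim: m => [|m IH]; first by rewrite /= mul0r rot0.
rewrite iterS IH rotD; congr rot.
by rewrite -addn1 natrD mulrDl mul1r addrC.
Qed.

Lemma iter_mulN (R : realType) (f : R * R -> R * R) (N q : nat) :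
  has_order f N -> iter (q * N) f = id.
Proof.
case=> _ [fN _]; elim: q => [|q IH]; first by [].
apply/funext => x; rewrite mulSn iterD fN IH.
by [].
Qed.

Lemma order_dvd (R : realType) (f : R * R -> R * R) (N a : nat) :
  has_order f N -> iter a f = id -> (N %| a)%N.
Proof.
move=> ho fa; have [N0 [fN fm]] := ho.
have e2 : iter (a %% N)%N f = id.
  apply/funext => x; have := congr1 (fun g => g x) fa.
  rewrite /= {1}(divn_eq a N) iterD (iter_mulN _ _ _ _ ho) /= => h.
  by rewrite h.
case: (posnP (a %% N)%N) => [h|h]; first by rewrite /dvdn h.
by move: (fm (a %% N)%N); rewrite h ltn_pmod // => /(_ isT) /(_ e2).
Qed.

Lemma iter_shift (T : Type) (f : T -> T) (z : int -> T) (s : int) :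
  (forall i, f (z i) = z (s + i)) -> forall (j : nat) i, iter j f (z i) = z (j%:Z * s + i).
Proof.
move=> hf; elim => [|j IH] i; first by rewrite /= mul0r add0r.
rewrite iterS IH hf; congr z; rewrite intS; ring.
Qed.

Lemma perN (T : Type) (z : int -> T) (p : nat) :
  (forall i, z (i + p%:Z) = z i) -> forall (n : nat) i, z (i + n%:Z * p%:Z) = z i.
Proof.
move=> hp; elim => [|n IH] i; first by rewrite mul0r addr0.
have -> : i + n.+1%:Z * p%:Z = (i + n%:Z * p%:Z) + p%:Z by rewrite intS; ring.
by rewrite hp IH.
Qed.

Lemma perZ (T : Type) (z : int -> T) (p : nat) :
  (forall i, z (i + p%:Z) = z i) -> forall (q : int) i, z (i + q * p%:Z) = z i.
Proof.
move=> hp [n|n] i; first exact: perN.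
have := (@perN _ _ _ hp) n.+1 (i + Negz n * p%:Z).
have -> : i + Negz n * p%:Z + n.+1%:Z * p%:Z = i by rewrite NegzE; ring.
by move=> ->.
Qed.

Lemma per_dvd (T : Type) (z : int -> T) (p q : nat) :
  (0 < p)%N -> (forall i, z (i + p%:Z) = z i) ->
  (forall q : nat, (0 < q < p)%N -> exists i, z (i + q%:Z) <> z i) ->
  (forall i, z (i + q%:Z) = z i) -> (p %| q)%N.
Proof.
move=> p0 hp hmin hq.
have h : forall i, z (i + (q %% p)%N%:Z) = z i.
  move=> i; rewrite -[in RHS](hq i) -[in LHS](@perZ _ _ _ hp ((q %/ p)%N%:Z) (i + (q %% p)%N%:Z)).
  congr z; rewrite [in RHS](divn_eq q p) PoszD PoszM; ring.
case: (posnP (q %% p)%N) => [e|e]; first by rewrite /dvdn e.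
have [i hi] := hmin (q %% p)%N (andb_true_intro (conj e (ltn_pmod q p0))).
by exfalso; apply: hi.
Qed.

Lemma modrep (T : Type) (z : int -> T) (p : nat) :
  (0 < p)%N -> (forall i, z (i + p%:Z) = z i) ->
  forall m : int, exists k : nat, (k < p)%N /\ forall i, z (m + i) = z (k%:Z + i).
Proof.
move=> p0 hp m.
have pz : p%:Z != 0 by case: (p) p0.
have ge := modz_ge0 m pz.
have lt : (m %% p%:Z)%Z < p%:Z by apply: ltz_pmod; rewrite ltz_nat.
exists `|(m %% p%:Z)%Z|%N; split.
  by rewrite -ltz_nat gez0_abs.
move=> i; rewrite gez0_abs //.
rewrite -(@perZ _ _ _ hp ((m %/ p%:Z)%Z) ((m %% p%:Z)%Z + i)).
congr z; rewrite {1}(divz_eq m p%:Z); ring.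
Qed.

Lemma gen_in (R : realType) (A : set (R * R -> R * R)) g : A g -> gen_group A g.
Proof. by move=> Ag S _ AS _ _; apply: AS. Qed.

Theorem mainTheorem9 (R : realType) (n : nat) (Gamma : set (R * R))
  (rho sigma : R * R -> R * R) (N : nat) (z : int -> R * R) (p : nat) :
  (3 <= n)%N ->
  Dn_symmetric_billiard_curve n Gamma ->
  Dn n rho -> is_rotation n rho -> has_order rho N -> (3 <= N)%N ->
  Dn n sigma -> is_reflection n sigma ->
  billiard_sequence Gamma z ->
  minimal_period z p -> (3 <= p)%N ->
  spatiotemporal n z = gen_group [set rho; sigma] ->
  [/\ (N %| p)%N,
      (exists! M : nat, [/\ (1 <= M <= N - 1)%N, coprime M N &
         forall i : int, iter M rho (z i) = z ((p %/ N)%N%:Z + i)]) &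
      (exists! k : nat, (k < p)%N /\
         forall i : int, sigma (z i) = z (k%:Z - i))].
Proof.
move=> n3 _ _ [kr rhoE] hord N3 _ [ks sigE] [_ zne] hper p3 HH.
have [p0 [zp zmin]] := hper.
have [t rhoR] : exists t : R, rho = rot t.
  by exists (2 * pi * kr%:R / n%:R); rewrite rhoE.
have [s sigR] : exists s : R, forall v, sigma v = rot s (Sref v).
  by exists (2 * pi * ks%:R / n%:R) => v; rewrite sigE.
have z01 : z 0 <> z 1 by have := zne 0; rewrite add0r.
have N0 : (0 < N)%N by lia.
have ordd := order_dvd _ _ _ _ hord.
have fixall : forall a : nat, (forall i, iter a rho (z i) = z i) -> (N %| a)%N.
  move=> a ha; apply: ordd; rewrite rhoR.
  have [c1 s1] : cos (a%:R * t) = 1 /\ sin (a%:R * t) = 0.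
    by apply: (rot_fix2 _ _ _ _ z01); rewrite -iter_rot -rhoR; apply: ha.
  by apply/funext => v; rewrite iter_rot (rot_id _ _ c1 s1).
have not2 : ~ (N %| 2)%N by move/dvdn_leq => /(_ isT); lia.
have Hrho : spatiotemporal n z rho by rewrite HH; apply: gen_in; left.
have Hsig : spatiotemporal n z sigma by rewrite HH; apply: gen_in; right.
case: Hrho => _ [[k0 hk0] | [k0 hk0]]; last first.
  exfalso; apply: not2; apply: fixall => i /=; rewrite !hk0; congr z; ring.
have [k' [_ hk'e]] := modrep _ _ _ p0 zp k0.
have hk : forall i, rho (z i) = z (k'%:Z + i) by move=> i; rewrite hk0 hk'e.
clear hk0 hk'e.
have part3 : exists! k : nat, (k < p)%N /\ forall i : int, sigma (z i) = z (k%:Z - i).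
  case: Hsig => _ [[m hm] | [m hm]].
    exfalso; apply: not2; apply: ordd; rewrite rhoR.
    have key : forall i, rot (2%:R * t) (Sref (z i)) = Sref (z i).
      move=> i.
      have comm : sigma (rho (z i)) = rho (sigma (z i)).
        by rewrite hk hm hm hk; congr z; ring.
      rewrite !sigR rhoR Sref_rot !rotD in comm.
      have := congr1 (rot (t - s)) comm; rewrite !rotD.
      have -> : t - s + (s + - t) = 0 by ring.
      have -> : t - s + (t + s) = 2%:R * t by ring.
      by rewrite rot0 => h; rewrite -h.
    have SI : Sref (z 0) <> Sref (z 1).
      by move=> e; apply: z01; rewrite -(SrefK _ (z 0)) e SrefK.
    have [c1 s1] := rot_fix2 _ _ _ _ SI (key 0) (key 1).
    by apply/funext => v; rewrite iter_rot (rot_id _ _ c1 s1).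
  have [kk [kkp hkk]] := modrep _ _ _ p0 zp m.
  have hsig : forall i, sigma (z i) = z (kk%:Z - i) by move=> i; rewrite hm hkk.
  have uniq_sh : forall a b : nat, (a <= b)%N -> (b < p)%N ->
      (forall i, z (a%:Z - i) = z (b%:Z - i)) -> a = b.
    move=> a b ab bp h.
    have : (p %| b - a)%N.
      apply: (per_dvd _ _ _ _ p0 zp zmin) => i.
      have := h (a%:Z - i).
      have -> : a%:Z - (a%:Z - i) = i by ring.
      move=> ->; congr z; lia.
    case: (posnP (b - a)%N) => [e|e]; first lia.
    move/(dvdn_leq e); lia.
  exists kk; split; first by split.
  move=> k1 [k1p hk1].
  case: (leqP kk k1) => h.
    by apply: uniq_sh => // i; rewrite -hsig hk1.
  apply/esym; apply: uniq_sh => //; first exact: ltnW.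
  by move=> i; rewrite -hsig hk1.
have k'0 : (0 < k')%N.
  case: (posnP k') => // e; exfalso.
  have : (N %| 1)%N by apply: fixall => i /=; rewrite hk e; congr z; exact: add0r.
  move/dvdn_leq => /(_ isT); lia.
have [g gE] : exists g, g = gcdn k' p by eexists.
case: (egcdnP p k'0) => km kn hkm _.
rewrite -gE in hkm.
have hu : forall i, iter km rho (z i) = z (g%:Z + i).
  move=> i; rewrite (iter_shift _ _ _ _ hk) -(@perZ _ _ _ zp (kn%:Z) (g%:Z + i)).
  have e : km%:Z * k'%:Z = kn%:Z * p%:Z + g%:Z by rewrite -!PoszM -PoszD hkm.
  congr z; rewrite e; ring.
have g0 : (0 < g)%N by rewrite gE gcdn_gt0 k'0.
have [a k'E] : exists a, k' = (a * g)%N.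
  by exists (k' %/ g)%N; rewrite divnK // gE dvdn_gcdl.
have [p' pE] : exists p', p = (p' * g)%N.
  by exists (p %/ g)%N; rewrite divnK // gE dvdn_gcdr.
have Np' : (N %| p')%N.
  apply: fixall => i; rewrite (iter_shift _ _ _ _ hk).
  rewrite -[in RHS](@perZ _ _ _ zp a%:Z i).
  have e : (p' * k' = a * p)%N by rewrite k'E pE mulnCA.
  congr z; rewrite -!PoszM e addrC; done.
have p'N : (p' %| N)%N.
  have hNg : forall i, z (i + (N * g)%N%:Z) = z i.
    move=> i; have := iter_shift _ _ _ _ hu N i.
    rewrite -iterM mulnC (iter_mulN _ _ _ km hord) /= => e.
    by rewrite [RHS]e; congr z; rewrite PoszM; ring.
  have := per_dvd _ _ _ _ p0 zp zmin hNg.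
  by rewrite pE dvdn_pmul2r.
have p'N' : p' = N by apply/eqP; rewrite eqn_dvd p'N Np'.
have pNg : p = (N * g)%N by rewrite pE p'N'.
have Ndvd : (N %| p)%N by rewrite pNg dvdn_mulr.
have pdivN : (p %/ N)%N = g by rewrite pNg mulKn.
have g_lt : (g < p)%N by rewrite pNg -{1}[g]mul1n ltn_pmul2r //; lia.
have shift_uniq : forall a b : nat, (a <= b)%N -> (b < N)%N ->
   (forall i, iter a rho (z i) = z (g%:Z + i)) ->
   (forall i, iter b rho (z i) = z (g%:Z + i)) -> a = b.
  move=> a0 b ab bN ha hb.
  have : (N %| b - a0)%N.
    apply: fixall => j.
    have h := hb (j - g%:Z).
    have e : g%:Z + (j - g%:Z) = j by ring.
    by rewrite -(subnK ab) iterD ha e in h.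
  case: (posnP (b - a0)%N) => [e|e]; first lia.
  move/(dvdn_leq e); lia.
have [M ME] : exists M, M = (km %% N)%N by eexists.
have hM : forall i, iter M rho (z i) = z (g%:Z + i).
  move=> i; rewrite -hu [in RHS](divn_eq km N) iterD (iter_mulN _ _ _ _ hord) ME.
  by [].
have MN : (M < N)%N by rewrite ME ltn_pmod.
have M0 : (0 < M)%N.
  case: (posnP M) => // e; exfalso.
  have : (p %| g)%N.
    apply: (per_dvd _ _ _ _ p0 zp zmin) => i.
    have := hM i; rewrite e /= => h.
    by rewrite addrC h.
  move/dvdn_leq => /(_ g0); lia.
split => //.
rewrite pdivN; exists M; split.
  split => //; first by apply/andP; split => //; lia.
  have [c cE] : exists c, c = gcdn M N by eexists.
  have c0 : (0 < c)%N by rewrite cE gcdn_gt0 N0 orbT.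
  have [a1 ME2] : exists a1, M = (a1 * c)%N.
    by exists (M %/ c)%N; rewrite divnK // cE dvdn_gcdl.
  have [b NE] : exists b, N = (b * c)%N.
    by exists (N %/ c)%N; rewrite divnK // cE dvdn_gcdr.
  have hper2 : forall i, z (i + (b * g)%N%:Z) = z i.
    move=> i; have := iter_shift _ _ _ _ hM b i.
    have eb : (b * M = a1 * N)%N by rewrite ME2 NE mulnCA.
    rewrite -iterM eb (iter_mulN _ _ _ a1 hord) /= => e.
    by rewrite [RHS]e; congr z; rewrite PoszM; ring.
  have := per_dvd _ _ _ _ p0 zp zmin hper2.
  rewrite pNg dvdn_pmul2r // => Nb.
  have b0 : (0 < b)%N by move: N0; rewrite NE muln_gt0 => /andP[].
  have := dvdn_leq b0 Nb => Nleb.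
  rewrite /coprime -cE; apply/eqP.
  have : (b * c <= b * 1)%N by rewrite muln1 -NE.
  rewrite leq_pmul2l // => c1; lia.
move=> M' [/andP[M'1 M'N] _ hM'].
case: (leqP M M') => h.
  apply: shift_uniq => //; lia.
apply/esym; apply: shift_uniq => //; exact: ltnW.
Qed.
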